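(* Let $E,E'\subset[0,1]$ be an $s$-regular set and a $t$-regular set respectively, with $s<t$, and suppose $\{0,1\}\subset E$. Then there is a map $f:[0,1]\to[0,1]$ which is bi-Lipschitz onto its image and satisfies $f(E)\subset E'$.
   Context: A compact set $E\subset\mathbb{R}$ is $s$-regular (Ahlfors $s$-regular) if there is a Borel measure $\kappa$ supported on $E$ and constants $0<c\le C$ with $c\,r^s\le\kappa(B(x,r))\le C\,r^s$ for all $x\in E$ and $0<r\le\mathrm{diam}(E)$. A map $f$ is bi-Lipschitz onto its image if $L^{-1}|x-y|\le|f(x)-f(y)|\le L|x-y|$ for all $x,y$, for some $L\ge1$. *)

(* Defs.v *)
From HB Require Import structures.
From mathcomp Require Import all_boot all_order all_algebra.
From mathcomp Require Import all_classical all_reals all_analysis.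
Set Implicit Arguments. Unset Strict Implicit. Unset Printing Implicit Defensive.
Import Order.TTheory GRing.Theory Num.Theory.
Import numFieldNormedType.Exports.
Local Open Scope classical_set_scope.
Local Open Scope ring_scope.

Definition diam {R : realType} (E : set R) : R :=
  sup [set `|x - y| | x in E & y in E].

Definition ahlfors_regular {R : realType} (s : R) (E : set R) : Prop :=
  compact E /\ 0 < diam E /\
  exists (kappa : {measure set R -> \bar R}) (c C : R),
    kappa (~` E) = 0%E /\ 0 < c /\ c <= C /\
    forall x r, E x -> 0 < r -> r <= diam E ->
      ((c * r `^ s)%:E <= kappa (ball x r))%E /\
      (kappa (ball x r) <= (C * r `^ s)%:E)%E.

Definition bilipschitz_on {R : realType} (A : set R) (f : R -> R) : Prop :=
  exists L : R, 1 <= L /\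
    forall x y, A x -> A y ->
      L^-1 * `|x - y| <= `|f x - f y| /\ `|f x - f y| <= L * `|x - y|.

(* Main.v *)
Require Import Defs.
From HB Require Import structures.
From mathcomp Require Import all_boot all_order all_algebra.
From mathcomp Require Import all_classical all_reals all_analysis.
From mathcomp Require Import zify ring lra.
Import Order.TTheory GRing.Theory Num.Theory.
Import numFieldNormedType.Exports.
Local Open Scope classical_set_scope.
Local Open Scope ring_scope.

Section Basics.
Variable R : realType.
Lemma closed_approx (A : set R) (x : R) : closed A ->
  (forall e : R, 0 < e -> exists a, A a /\ `|x - a| < e) -> A x.
Proof.
move=> cA H; apply: contrapT => nAx.
have : open (~` A) by exact: closed_openC.
rewrite openE => /(_ x nAx).
move=> /nbhs_ballP[e /= e0 sub].
have [a [Aa xa]] := H e e0.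
exact: (sub a xa Aa).
Qed.
End Basics.


Section BigU.
Variable T : Type.
Lemma bigU_mem (l : seq nat) (B : nat -> set T) z :
  (\big[setU/set0]_(j <- l) B j) z <-> exists2 j, j \in l & B j z.
Proof.
elim: l => [|j l IH]; first by rewrite big_nil; split => // [[j]].
rewrite big_cons; split.
  case=> [Bz|/IH [i il Biz]]; first by exists j => //; rewrite in_cons eqxx.
  by exists i => //; rewrite in_cons il orbT.
case=> i; rewrite in_cons => /orP [/eqP -> Bz|il Bz]; first by left.
by right; apply/IH; exists i.
Qed.
End BigU.

Lemma pow_unbounded (R : realType) (a A : R) : 0 < a -> exists m : nat, (4 <= m)%N /\ A < m%:R `^ a.
Proof.
move=> a0; set X := (`|A| + 1) `^ a^-1.
exists (Num.trunc X + 4)%N; split; first lia.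
have X0 : 0 <= X by apply: powR_ge0.
have Xm : X < (Num.trunc X + 4)%:R.
  apply: lt_le_trans (truncnS_gt X) _; by rewrite ler_nat -addn1 leq_add2l.
have Xm' : X `^ a < (Num.trunc X + 4)%:R `^ a.
  by apply: gt0_ltr_powR => //; rewrite nnegrE // ler0n.
apply: le_lt_trans Xm'; rewrite /X -powRrM mulVf ?gt_eqF // powRr1; last by rewrite addr_ge0.
by apply: le_trans (ler_norm A) _; rewrite lerDl.
Qed.

Section Reg.
Variable R : realType.
Variables (s : R) (F : set R) (mu : {measure set R -> \bar R}) (c C D : R).
Hypothesis cF : closed F.
Hypothesis muC : mu (~` F) = 0%E.
Hypothesis c0 : 0 < c.
Hypothesis cC : c <= C.
Hypothesis hb : forall x r, F x -> 0 < r -> r <= D ->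
  ((c * r `^ s)%:E <= mu (ball x r))%E /\ (mu (ball x r) <= (C * r `^ s)%:E)%E.

Lemma mball (x r : R) : measurable (ball x r).
Proof. exact: measurable_realfun.open_measurable (ball_open x r). Qed.

Lemma mcF : measurable (~` F).
Proof. exact: measurable_realfun.open_measurable (closed_openC cF). Qed.

Lemma union_le (l : seq nat) (B : nat -> set R) a :
  (forall j, measurable (B j)) -> (forall j, j \in l -> (mu (B j) <= a%:E)%E) ->
  (mu (\big[setU/set0]_(j <- l) B j) <= ((size l)%:R * a)%:E)%E.
Proof.
move=> mB; elim: l => [|j l IH] H.
  by rewrite big_nil measure0 /= mul0r.
rewrite big_cons.
apply: le_trans (measureU2 mu (mB j) (bigsetU_measurable _ (fun i _ => mB i))) _.
rewrite /= -addn1 natrD mulrDl mul1r EFinD addeC; apply: leeD.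
  by apply: H; rewrite in_cons eqxx.
by apply: IH => i il; apply: H; rewrite in_cons il orbT.
Qed.

Lemma union_ge (l : seq nat) (p : nat -> R) d : uniq l -> 0 < d -> d <= D ->
  (forall j, j \in l -> F (p j)) ->
  (forall i j, i \in l -> j \in l -> i != j -> 2 * d <= `|p i - p j|) ->
  (((size l)%:R * (c * d `^ s))%:E <= mu (\big[setU/set0]_(j <- l) ball (p j) d))%E.
Proof.
move=> + d0 dD; elim: l => [|j l IH] /= ul Fp sep.
  by rewrite big_nil measure0 mul0r.
move/andP: ul => [jl ul].
have disj : ball (p j) d `&` \big[setU/set0]_(j <- l) ball (p j) d = set0.
  apply/seteqP; split => // z [Bjz /bigU_mem [i il Biz]].
  have := sep j i; rewrite !in_cons eqxx il orbT => /(_ isT isT).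
  have -> : (j != i) by apply: contraNneq jl => ->.
  move=> /(_ isT); apply/negP; rewrite -ltNge.
  apply: le_lt_trans (ler_distD z _ _) _.
  rewrite mulr2n mulrDl mul1r; apply: ltrD; first by [].
  by rewrite distrC.
rewrite big_cons measureU //; last first.
  by apply: bigsetU_measurable => i _; apply: mball.
  by apply: mball.
rewrite -addn1 natrD mulrDl mul1r EFinD addeC; apply: leeD.
  by have [] := @hb (p j) d (Fp j (mem_head _ _)) d0 dD.
apply: IH => //.
  by move=> i il; apply: Fp; rewrite in_cons il orbT.
by move=> i k il kl; apply: sep; rewrite in_cons ?il ?kl orbT.
Qed.

Definition hstep (r : R) (m : nat) := r * 2 / m%:R.
Definition Iv y r m j := [set e | F e /\ y - r + j%:R * hstep r m <= e <= y - r + j.+1%:R * hstep r m].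
Definition zpt y r m j := xget 0 (Iv y r m j).
Definition Ssel y r m := [seq j <- iota 0 m | `[< Iv y r m j !=set0 >] ].
Definition qpt y r m i := zpt y r m (nth 0%N (Ssel y r m) (3*i)).

Lemma nth_gap (S : seq nat) a b : sorted ltn S -> (a <= b)%N -> (b < size S)%N ->
  (nth 0 S a + (b - a) <= nth 0 S b)%N.
Proof.
move=> sS; elim: b => [|b IH]; first by rewrite leqn0 => /eqP ->; rewrite addn0.
rewrite leq_eqVlt => /orP [/eqP ->|]; first by rewrite subnn addn0.
rewrite ltnS => ab bS.
have := IH ab (ltnW bS).
have : (nth 0 S b < nth 0 S b.+1)%N.
  by apply: (sorted_ltn_nth ltn_trans) => //; rewrite inE // ltnW.
rewrite subSn //; lia.
Qed.

Section Cover.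
Variables (y r : R) (m : nat).
Hypotheses (Fy : F y) (r0 : 0 < r) (rD : r <= D) (m4 : (4 <= m)%N).
Let h := hstep r m.
Let S := Ssel y r m.

Lemma m0 : 0 < m%:R :> R.
Proof. by rewrite ltr0n; lia. Qed.

Lemma h0 : 0 < h.
Proof. by rewrite /h /hstep divr_gt0 ?mulr_gt0 ?m0. Qed.

Lemma mh : m%:R * h = r * 2.
Proof. by rewrite /h /hstep mulrC divfK // gt_eqF // m0. Qed.

Lemma h2D : 2 * h <= D.
Proof.
apply: le_trans rD; rewrite /h /hstep mulrA ler_pdivrMr ?m0 //.
have m4' : 4 <= m%:R :> R by rewrite (ler_nat R 4 m).
have := r0; move: m4'; nra.
Qed.

Lemma S_sorted : sorted ltn S.
Proof. exact: sorted_filter ltn_trans _ _ (iota_ltn_sorted 0 m). Qed.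

Lemma S_mem j : j \in S -> (j < m)%N /\ Iv y r m j (zpt y r m j).
Proof.
rewrite mem_filter mem_iota => /andP [/asboolP [e Ie] /andP [_ jm]].
by split => //; apply: xgetI Ie.
Qed.

Lemma zpt_prop j : j \in S -> F (zpt y r m j) /\ `|zpt y r m j - y| <= r.
Proof.
move=> /S_mem [jm [Fz /andP [z1 z2]]]; split => //.
have hp := h0.
have H1 : j.+1%:R * h <= r * 2 by rewrite -mh ler_pM2r // ler_nat.
have H2 : 0 <= j%:R * h by rewrite mulr_ge0 // ltW.
rewrite ler_norml; apply/andP; split; move: z1 z2; rewrite -/h; lra.
Qed.


Lemma cover_count : c * r `^ s <= (size S)%:R * (C * (2 * h) `^ s).
Proof.
have hp := h0.
have [lb _] := hb y r Fy r0 rD.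
have sub : ball y r `<=` ~` F `|` \big[setU/set0]_(j <- S) ball (zpt y r m j) (2*h).
  move=> z yz; have [Fz|nFz] := pselect (F z); last by left.
  right; apply/bigU_mem.
  have yz' : `|y - z| < r := yz.
  set u := (z - (y - r)) / h.
  have uh : u * h = z - (y - r) by rewrite /u divfK // gt_eqF.
  have u0 : 0 <= u.
    rewrite /u divr_ge0 ?(ltW hp) //; move: yz'; rewrite ltr_norml; lra.
  have /andP [t1 t2] := truncn_itv u0.
  have Iz : Iv y r m (Num.trunc u) z.
    split => //; apply/andP; split.
      have : (Num.trunc u)%:R * h <= u * h by rewrite ler_pM2r.
      rewrite uh -/h; lra.
    have : u * h <= (Num.trunc u).+1%:R * h by rewrite ler_pM2r // ltW.
    rewrite uh -/h; lra.
  have jS : Num.trunc u \in S.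
    rewrite mem_filter mem_iota /=; apply/andP; split; first by apply/asboolP; exists z.
    rewrite truncn_lt_nat //; rewrite -(ltr_pM2r hp) uh mh.
    move: yz'; rewrite ltr_norml; lra.
  exists (Num.trunc u) => //.
  have [_ [_ /andP [w1 w2]]] := S_mem _ jS.
  move: Iz => [_ /andP [v1 v2]].
  rewrite /ball /= ltr_norml; move: w1 w2 v1 v2; rewrite -/h -addn1 natrD mulrDl mul1r; lra.
have mU : measurable (\big[setU/set0]_(j <- S) ball (zpt y r m j) (2*h)).
  by apply: bigsetU_measurable => j _; apply: mball.
have h2 := h2D.
have := le_trans lb (le_measure mu _ _ sub).
rewrite !inE => /(_ (mball _ _) (measurableU _ _ mcF mU)) => H.
have H2 := le_trans H (measureU2 mu mcF mU).
rewrite -lee_fin; apply: le_trans H2 _.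
apply: le_trans (_ : _ <= 0 + _)%E _.
  by apply: leeD => //; rewrite le_eqVlt; apply/orP; left; apply/eqP; exact: muC.
rewrite add0e.
apply: union_le => [j|j jS]; first exact: mball.
have [Fz _] := zpt_prop _ jS.
by have [] := hb (zpt y r m j) (2*h) Fz (mulr_gt0 (ltr0Sn _ _) hp) h2.
Qed.

Lemma qpt_idx i : (i < size S %/ 3)%N -> (3 * i < size S)%N.
Proof. by rewrite leq_divRL //; lia. Qed.

Lemma qpt_prop i : (i < size S %/ 3)%N -> F (qpt y r m i) /\ `|qpt y r m i - y| <= r.
Proof. by move=> /qpt_idx H; apply: zpt_prop; apply: mem_nth. Qed.

Lemma qpt_sep i i' : (i < i')%N -> (i' < size S %/ 3)%N -> qpt y r m i + 2 * h <= qpt y r m i'.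
Proof.
move=> ii' i'S; have H' := qpt_idx _ i'S.
have H : (3 * i < size S)%N by lia.
have g := @nth_gap S (3 * i) (3 * i') S_sorted (leq_mul (leqnn 3) (ltnW ii')) H'.
have g3 : (nth 0 S (3 * i) + 3 <= nth 0 S (3 * i'))%N by move: g; lia.
have JJ : (nth 0 S (3 * i) + 3)%:R <= (nth 0 S (3 * i'))%:R :> R by rewrite ler_nat.
have [_ [_ /andP [a1 a2]]] := S_mem _ (mem_nth 0 H).
have [_ [_ /andP [b1 b2]]] := S_mem _ (mem_nth 0 H').
rewrite /qpt -/S; move: a1 a2 b1 b2 JJ; rewrite -/h.
set J := nth 0 S (3 * i); set J' := nth 0 S (3 * i').
have hp := h0.
move=> a1 a2 b1 b2 JJ; rewrite -natr1 in a2; rewrite natrD in JJ.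
have : (J%:R + 3%:R) * h <= J'%:R * h by rewrite ler_pM2r.
rewrite !mulrDl mul1r; move: a1 a2 b1 b2 JJ.
rewrite mulrDl mul1r; lra.
Qed.

Lemma cover_count2 : c * (m%:R / 4) `^ s <= (size S)%:R * C.
Proof.
have := cover_count.
have hp := h0; have mp := m0.
have -> : 2 * h = r * (4 / m%:R) by rewrite /h /hstep; field; rewrite gt_eqF.
rewrite powRM ?(ltW r0) ?divr_ge0 ?(ltW mp) //.
have PQ : (4 / m%:R) `^ s * (m%:R / 4) `^ s = 1.
  rewrite -powRM ?divr_ge0 ?(ltW mp) //.
  by rewrite mulrA divfK ?gt_eqF // divff ?gt_eqF // powR1.
have rs : 0 < r `^ s by apply: powR_gt0.
set P := (4 / m%:R) `^ s in PQ *; set Q := (m%:R / 4) `^ s in PQ *.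
have Q0 : 0 <= Q by apply: powR_ge0.
set N := (size S)%:R.
have -> : N * (C * (r `^ s * P)) = (N * C * P) * r `^ s by ring.
rewrite ler_pM2r // => H.
have := ler_wpM2r Q0 H.
by rewrite -[_ * P * Q]mulrA PQ mulr1.
Qed.
End Cover.

Lemma exp_ge0 x0 : F x0 -> 0 < D -> 0 <= s.
Proof.
move=> Fx D0; rewrite leNgt; apply/negP => sN.
set a := C / c + 1.
have a1 : 1 <= a by rewrite lerDr divr_ge0 // ltW // (lt_le_trans c0 cC).
set l := a `^ s^-1.
have l0 : 0 < l by apply: powR_gt0; lra.
have l1 : l <= 1.
  rewrite /l -(powRr0 a); apply: ler_powR => //; rewrite invr_le0 ltW //.
have ls : l `^ s = a by rewrite /l -powRrM mulVf ?lt_eqF // powRr1 //; lra.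
have lD0 : 0 < D * l by rewrite mulr_gt0.
have lDD : D * l <= D by rewrite ler_piMr // ltW.
have [lb _] := hb x0 (D * l) Fx lD0 lDD.
have [_ ub] := hb x0 D Fx D0 (lexx D).
have sub : ball x0 (D * l) `<=` ball x0 D.
  by move=> z; rewrite /ball /=; move/lt_le_trans; apply.
have := le_trans lb (le_measure mu _ _ sub).
rewrite !inE => /(_ (mball _ _) (mball _ _)) => H.
have := le_trans H ub; rewrite lee_fin powRM ?(ltW D0) ?(ltW l0) // ls.
have Ds : 0 < D `^ s by apply: powR_gt0.
move=> H'.
have H2 : c * a <= C by rewrite -(ler_pM2r Ds) -mulrA (mulrC a).
have : c * a = C + c by rewrite /a mulrDr mulr1 mulrCA divff ?gt_eqF // mulr1.
move=> Eca; move: H2 Eca; generalize (c * a) => ca; move: c0; lra.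
Qed.

Lemma exp_le1 y : F y -> 0 < D -> s <= 1.
Proof.
move=> Fy D0; rewrite leNgt; apply/negP => s1.
set q := (4^-1 : R) `^ s.
have q0 : 0 < q by apply: powR_gt0.
have cq : 0 < c * q by rewrite mulr_gt0.
have s1' : 0 < s - 1 by rewrite subr_gt0.
have [m [m4 Hm]] := @pow_unbounded R (s - 1) (C / (c * q)) s1'.
have mp : 0 < m%:R :> R by rewrite ltr0n; lia.
have H := cover_count2 y D m Fy D0 (lexx D) m4.
set N := (size (Ssel y D m))%:R in H.
have sz : N <= m%:R.
  by rewrite /N ler_nat size_filter (leq_trans (count_size _ _)) // size_iota.
have e1 : (m%:R / 4) `^ s = m%:R `^ (s-1) * m%:R * q.
  rewrite powRM ?(ltW mp) ?invr_ge0 // -/q; congr (_ * _).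
  rewrite -{3}(powRr1 (ltW mp)) -powRD; last by apply/implyP => _; rewrite gt_eqF.
  by rewrite subrK.
move: Hm; rewrite ltr_pdivrMr // => Hm.
have h1 : C * m%:R < m%:R `^ (s-1) * (c * q) * m%:R by rewrite ltr_pM2r.
have h2 : m%:R `^ (s-1) * (c * q) * m%:R = c * (m%:R / 4) `^ s by rewrite e1; ring.
have C0 : 0 <= C by apply: le_trans cC; apply: ltW.
have h3 : N * C <= m%:R * C by rewrite ler_wpM2r.
move: h1 h2 H h3; generalize (m%:R `^ (s-1) * (c * q) * m%:R) (c * (m%:R / 4) `^ s) => X Y.
lra.
Qed.
End Reg.



Arguments mball {R} x r.
Arguments mcF {R F}.
Arguments union_ge {R s F mu c C D}.
Arguments union_le {R mu}.
Arguments cover_count2 {R s F mu c C D}.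
Arguments qpt_sep {R F c C D}.
Arguments qpt_prop {R F c C D}.
Arguments exp_ge0 {R s F mu c C D}.
Arguments exp_le1 {R s F mu c C D}.
Arguments bigU_mem {T}.

Section ESec.
Variable R : realType.
Variables (s : R) (E : set R) (mu : {measure set R -> \bar R}) (c C : R).
Hypothesis cE : closed E.
Hypothesis E01 : forall x, E x -> 0 <= x <= 1.
Hypothesis E0 : E 0.
Hypothesis E1 : E 1.
Hypothesis muC : mu (~` E) = 0%E.
Hypothesis c0 : 0 < c.
Hypothesis cC : c <= C.
Hypothesis hb : forall x r, E x -> 0 < r -> r <= 1 ->
  ((c * r `^ s)%:E <= mu (ball x r))%E /\ (mu (ball x r) <= (C * r `^ s)%:E)%E.
Hypothesis s0 : 0 <= s.
Hypothesis s1 : s < 1.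

Lemma C0 : 0 < C.
Proof. exact: lt_le_trans c0 cC. Qed.

Lemma mu_ub x r : E x -> 0 < r -> (mu (ball x r) <= (2 * C * r `^ s)%:E)%E.
Proof.
move=> Ex r0; have Cp := C0.
have rs : 0 <= r `^ s by apply: powR_ge0.
case: (leP r 1) => r1.
  have [_ ub] := hb x r Ex r0 r1; apply: le_trans ub _; rewrite lee_fin.
  by rewrite -mulrA; apply: ler_peMl; [rewrite mulr_ge0 // ltW|lra].
have sub : ball x r `<=` ~` E `|` (ball (0:R) 1 `|` ball (1:R) 1).
  move=> z _; have [Ez|nEz] := pselect (E z); last by left.
  right; have /andP [z0 z1] := E01 _ Ez.
  have [zl|ze] := ltP z 1.
    by left; rewrite /ball /= sub0r normrN ger0_norm.
  by right; rewrite /ball /= (_ : z = 1) ?subrr ?normr0 //; apply/eqP; rewrite eq_le z1 ze.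
have mB : measurable (ball (0:R) 1 `|` ball (1:R) 1) by apply: measurableU; apply: mball.
have := le_measure mu _ _ sub; rewrite !inE => /(_ (mball _ _) (measurableU _ _ (mcF cE) mB)) => H.
apply: le_trans H _; apply: le_trans (measureU2 mu (mcF cE) mB) _.
apply: le_trans (_ : _ <= 0 + _)%E _.
  by apply: leeD => //; rewrite le_eqVlt; apply/orP; left; apply/eqP; exact: muC.
rewrite add0e; apply: le_trans (measureU2 mu (mball _ _) (mball _ _)) _.
have [_ u0] := hb 0 1 E0 ltr01 (lexx 1).
have [_ u1] := hb 1 1 E1 ltr01 (lexx 1).
apply: le_trans (leeD u0 u1) _.
rewrite powR1 mulr1 -EFinD lee_fin.
have r1s : 1 <= r `^ s.
  have e : (1:R) `^ s = 1 by rewrite powR1.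
  by rewrite -{1}e; apply: ge0_ler_powR => //; rewrite ?nnegrE ?ltW //.
have : C + C = 2 * C * 1 by rewrite mulr1 mulr2n mulrDl mul1r.
move=> ->; rewrite ler_pM2l //; by rewrite mulr_gt0.
Qed.


Lemma pack x R0 d (l : seq nat) (p : nat -> R) : E x -> 0 < d -> d <= 1 -> 0 <= R0 -> uniq l ->
  (forall j, j \in l -> E (p j) /\ `|p j - x| <= R0) ->
  (forall i j, i \in l -> j \in l -> i != j -> 2 * d <= `|p i - p j|) ->
  (size l)%:R * (c * d `^ s) <= 2 * C * (R0 + d) `^ s.
Proof.
move=> Ex d0 d1 R00 ul Hp sep.
have H := union_ge hb l p d ul d0 d1 (fun j jl => (Hp j jl).1) sep.
have sub : \big[setU/set0]_(j <- l) ball (p j) d `<=` ball x (R0 + d).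
  move=> z /bigU_mem [j jl]; rewrite /ball /= => pz.
  have [_ pj] := Hp j jl.
  apply: le_lt_trans (ler_distD (p j) _ _) _.
  by apply: ler_ltD => //; rewrite distrC.
have mU : measurable (\big[setU/set0]_(j <- l) ball (p j) d).
  by apply: bigsetU_measurable => j _; apply: mball.
have := le_measure mu _ _ sub; rewrite !inE => /(_ mU (mball _ _)) => H2.
rewrite -lee_fin; apply: le_trans H _; apply: le_trans H2 _.
by apply: mu_ub => //; apply: ltr_wpDl.
Qed.

Definition gap (d x y : R) := exists u v, [/\ x <= u, v <= y, d < v - u &
  forall e, E e -> ~ (u < e < v)].
Definition same d x y := ~ gap d x y /\ ~ gap d y x.

Lemma gap_lt d x y : gap d x y -> d < y - x.
Proof. move=> [u [v [xu vy dvu _]]]; apply: lt_le_trans dvu _; lra. Qed.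

Lemma same_sym d x y : same d x y -> same d y x.
Proof. by move=> []. Qed.

Lemma same_close d x y : `|x - y| <= d -> same d x y.
Proof.
move=> H; split => /gap_lt; apply/negP; rewrite -leNgt;
  apply: le_trans H; [rewrite distrC|]; apply: ler_norm.
Qed.

Lemma far_of_notsame d x y : ~ same d x y -> d < `|x - y|.
Proof. by move=> H; rewrite ltNge; apply/negP => /same_close. Qed.

Lemma same_mono d d' x y : d <= d' -> same d x y -> same d' x y.
Proof.
move=> dd [h1 h2]; split => -[u [v [xu vy dvu He]]]; [apply: h1|apply: h2];
  exists u, v; split => //; exact: le_lt_trans dd dvu.
Qed.

Lemma same_trans d x y z : E y -> same d x y -> same d y z -> same d x z.
Proof.
move=> Ey [xy yx] [yz zy]; split => -[u [v [xu vz dvu He]]].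
  have : ~ (u < y < v) by apply: He.
  case: (leP y u) => yu.
    by move=> _; apply: yz; exists u, v.
  case: (leP v y) => vy; last by move=> H; apply: H; rewrite ?yu ?vy.
  by move=> _; apply: xy; exists u, v.
have : ~ (u < y < v) by apply: He.
case: (leP y u) => yu.
  by move=> _; apply: yx; exists u, v.
case: (leP v y) => vy; last by move=> H; apply: H; rewrite ?yu ?vy.
by move=> _; apply: zy; exists u, v.
Qed.

Lemma notsame_gap d x y : x <= y -> ~ same d x y -> gap d x y.
Proof.
move=> xy H; apply: contrapT => ng; apply: H; split => // /gap_lt.
have : 0 <= d.
  by apply: contrapT => /negP; rewrite -ltNge => d0; apply: ng; exists x, x; split => //;
    [rewrite subrr|move=> e _; lra].
lra.
Qed.

Definition Kc := Num.max 8 ((32 * C / c) `^ (1 - s)^-1).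

Lemma Kc_ge8 : 8 <= Kc.
Proof. by rewrite /Kc le_max lexx. Qed.

Lemma same_bound d x y : E x -> E y -> 0 < d -> d <= 1 -> same d x y -> `|x - y| <= Kc * d.
Proof.
wlog xy : x y / x <= y.
  move=> W Ex Ey d0 d1 sxy; case: (leP x y) => h; first exact: W.
  by rewrite distrC; apply: W => //; [exact: ltW | exact: same_sym].
move=> Ex Ey d0 d1 sxy.
rewrite distrC ger0_norm ?subr_ge0 //.
rewrite leNgt; apply/negP => HL.
set L := y - x in HL *.
have K8 := Kc_ge8.
set X := (32 * C / c) `^ (1 - s)^-1.
have KX : X <= Kc by rewrite /Kc le_max lexx orbT.
set lam := L / d.
have Ld : L = lam * d by rewrite /lam divfK // gt_eqF.
have lamK : Kc < lam by rewrite /lam ltr_pdivlMr.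
have lam8 : 8 < lam by apply: le_lt_trans lamK.
have lam0 : 0 < lam by lra.
set n := Num.trunc (lam / 4).
have nlt : lam / 4 < n.+1%:R := truncnS_gt _.
have nle : n%:R <= lam / 4 by rewrite truncn_le; lra.
set u := fun j : nat => x + j%:R * (4 * d).
have ujy j : (j < n)%N -> u j + 2 * d <= y.
  move=> jn; have : j.+1%:R <= n%:R :> R by rewrite ler_nat.
  rewrite -natr1 => jn'.
  have : (j%:R + 1) * (4 * d) <= lam / 4 * (4 * d).
    by rewrite ler_pM2r ?mulr_gt0 //; apply: le_trans jn' nle.
  have -> : lam / 4 * (4 * d) = L by rewrite Ld; field.
  rewrite /u /L; move: d0; lra.
set p := fun j : nat => xget 0 [set e | E e /\ u j < e < u j + 2 * d].
have pj j : (j < n)%N -> E (p j) /\ u j < p j < u j + 2 * d.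
  move=> jn; apply: (@xgetPex _ 0 [set e | E e /\ u j < e < u j + 2 * d]).
  apply: contrapT => ne; apply: (sxy.1).
  exists (u j), (u j + 2 * d); split.
  - by rewrite /u lerDl mulr_ge0 // mulr_ge0 // ltW.
  - exact: ujy.
  - by rewrite addrC addKr; lra.
  - by move=> e Ee He; apply: ne; exists e; split.
have psep i j : (i < j)%N -> (j < n)%N -> p i + 2 * d <= p j.
  move=> ij jn; have [_ /andP [a1 a2]] := pj i (ltn_trans ij jn).
  have [_ /andP [b1 b2]] := pj j jn.
  have : (i%:R + 1) * (4 * d) <= j%:R * (4 * d).
    by rewrite ler_pM2r ?mulr_gt0 // natr1 ler_nat.
  move: a1 a2 b1 b2; rewrite /u; move: d0; nra.
have := pack x L d (iota 0 n) p Ex d0 d1 _ (iota_uniq 0 n) _ _.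
have L0 : 0 <= L by rewrite Ld mulr_ge0 // ltW.
rewrite size_iota => /(_ L0).
have /[swap]/[apply] : forall j, j \in iota 0 n -> E (p j) /\ `|p j - x| <= L.
  move=> j; rewrite mem_iota add0n => /andP [_ jn].
  have [Ep /andP [a1 a2]] := pj j jn; split => //.
  have := ujy j jn; have : 0 <= j%:R * (4 * d) by rewrite mulr_ge0 // mulr_ge0 // ltW.
  rewrite ler_norml /u /L; move: a1 a2 d0; rewrite /u => a1 a2 d0 h1 h2; apply/andP; split; lra.
have /[swap]/[apply] : forall i j, i \in iota 0 n -> j \in iota 0 n -> i != j -> 2 * d <= `|p i - p j|.
  move=> i j; rewrite !mem_iota !add0n => /andP [_ i_n] /andP [_ jn].
  case: (ltngtP i j) => // ij _.
    by rewrite distrC ler_normr; apply/orP; left; rewrite lerBrDr addrC psep.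
  by rewrite ler_normr; apply/orP; left; rewrite lerBrDr addrC psep.
move=> H.
have ds0 : 0 < d `^ s by apply: powR_gt0.
have B0 : 0 < lam `^ s by apply: powR_gt0.
have e1 : (L + d) `^ s <= 2 * lam `^ s * d `^ s.
  have : (L + d) `^ s <= (2 * L) `^ s.
    apply: ge0_ler_powR => //; rewrite ?nnegrE; try lra.
    by rewrite Ld; nra.
  move/le_trans; apply.
  rewrite powRM ?(ler0n _ 2) // Ld powRM ?(ltW lam0) ?(ltW d0) // mulrA ler_pM2r //.
  rewrite ler_pM2r //.
  have h12 : (1 : R) <= 2 by lra.
  have := ler_powR h12 (ltW s1); rewrite powRr1 //; lra.
have f1 : n%:R * c <= 4 * C * lam `^ s.
  rewrite -(ler_pM2r ds0).
  apply: le_trans (_ : n%:R * (c * d `^ s) <= _); first by rewrite mulrA.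
  apply: le_trans H _.
  have C2 : 0 <= 2 * C by have := C0; lra.
  have := ler_wpM2l C2 e1.
  move/le_trans; apply; rewrite le_eqVlt; apply/orP; left; apply/eqP; ring.
have f2 : lam / 8 < n%:R by move: nlt lam8; rewrite -[n.+1%:R]natr1; lra.
have f3 : lam = lam `^ (1 - s) * lam `^ s.
  by rewrite -powRD ?subrK ?powRr1 ?(ltW lam0) //; apply/implyP => _; rewrite gt_eqF.
have f4 : 32 * C / c < lam `^ (1 - s).
  have X0 : 0 <= X by apply: powR_ge0.
  have : X `^ (1 - s) < lam `^ (1 - s).
    apply: gt0_ltr_powR; rewrite ?nnegrE ?(ltW lam0) //; first by move: s1; lra.
    exact: le_lt_trans KX lamK.
  apply: le_lt_trans; rewrite /X -powRrM mulVf ?gt_eqF ?subr_gt0 // powRr1 //.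
  by rewrite divr_ge0 ?mulr_ge0 ?ltW ?C0.
set A := lam `^ (1 - s) in f3 f4; set B := lam `^ s in f1 f3 B0.
have g1 : lam / 8 * c < n%:R * c by rewrite ltr_pM2r.
have g2 : (A * c / 8) * B < (4 * C) * B.
  have -> : (A * c / 8) * B = lam / 8 * c by rewrite f3; ring.
  exact: lt_le_trans g1 f1.
rewrite ltr_pM2r // in g2.
move: f4; rewrite ltr_pdivrMr // => f4.
move: g2 f4; lra.
Qed.

Definition aa d y := inf [set z | E z /\ same d z y].

Lemma aa_props d y : 0 <= d -> E y -> 0 <= aa d y <= y.
Proof.
move=> d0 Ey; set S := [set z | E z /\ same d z y].
have Sy : S y by split => //; apply: same_close; rewrite subrr normr0.
have lb : lbound S 0 by move=> z [Ez _]; have /andP [] := E01 _ Ez.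
apply/andP; split.
  by apply: lb_le_inf => //; exists y.
by apply: ge_inf => //; exists 0.
Qed.

Lemma aa_eq d y y' : E y -> E y' -> same d y y' -> aa d y = aa d y'.
Proof.
move=> Ey Ey' syy'; rewrite /aa; congr (inf _); apply/seteqP; split => z [Ez H]; split => //.
  exact: (@same_trans d z y y' Ey H syy').
exact: (@same_trans d z y' y Ey' H (@same_sym d y y' syy')).
Qed.

Lemma aa_sep d y y' : 0 <= d -> E y -> E y' -> y < y' -> ~ same d y y' -> aa d y + d < aa d y'.
Proof.
move=> d0 Ey Ey' yy' ns.
have [u [v [yu vy' dvu He]]] := @notsame_gap d y y' (ltW yy') ns.
have /andP [_ ay] := @aa_props d y d0 Ey.
have va : v <= aa d y'.
  apply: lb_le_inf.
    by exists y'; split => //; apply: same_close; rewrite subrr normr0.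
  move=> z [Ez [nz _]]; rewrite leNgt; apply/negP => zv.
  have : ~ (u < z < v) by apply: He.
  case: (leP z u) => zu.
    by move=> _; apply: nz; exists u, v.
  by move=> H; apply: H; rewrite ?zu ?zv.
move: ay yu dvu va; lra.
Qed.
End ESec.


Arguments pack {R s E mu c C} cE E01 E0 E1 muC c0 cC hb s0 x R0 d l p.
Arguments same_bound {R s E mu c C} cE E01 E0 E1 muC c0 cC hb s0 s1 d x y.
Arguments cover_count2 {R s F mu c C D}.
Arguments qpt_sep {R F c C D}.
Arguments qpt_prop {R F c C D}.

Arguments aa_eq {R E d y y'}.
Arguments same_mono {R E d d' x y}.
Arguments same_trans {R E d x y z}.
Arguments same_sym {R E d x y}.
Arguments aa_sep {R E} E01 {d y y'}.
Arguments aa_props {R E} E01 {d y}.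
Arguments far_of_notsame {R E d x y}.
Arguments same_close {R E d x y}.

Section Constr.
Variable R : realType.
Variables (s : R) (E : set R) (mu : {measure set R -> \bar R}) (c C : R).
Hypothesis cE : closed E.
Hypothesis E01 : forall x, E x -> 0 <= x <= 1.
Hypothesis E0 : E 0.
Hypothesis E1 : E 1.
Hypothesis muC : mu (~` E) = 0%E.
Hypothesis c0 : 0 < c.
Hypothesis cC : c <= C.
Hypothesis hb : forall x r, E x -> 0 < r -> r <= 1 ->
  ((c * r `^ s)%:E <= mu (ball x r))%E /\ (mu (ball x r) <= (C * r `^ s)%:E)%E.
Hypothesis s0 : 0 <= s.
Hypothesis s1 : s < 1.
Variables (t : R) (E' : set R) (mu' : {measure set R -> \bar R}) (c' C' D' : R).
Hypothesis cE' : closed E'.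
Hypothesis muC' : mu' (~` E') = 0%E.
Hypothesis c'0 : 0 < c'.
Hypothesis c'C' : c' <= C'.
Hypothesis hb' : forall x r, E' x -> 0 < r -> r <= D' ->
  ((c' * r `^ t)%:E <= mu' (ball x r))%E /\ (mu' (ball x r) <= (C' * r `^ t)%:E)%E.
Hypothesis D'0 : 0 < D'.
Variables (y0 : R) (m : nat).
Hypothesis Ey0 : E' y0.
Hypothesis m4 : (4 <= m)%N.
Hypothesis COND : 3 * (2 * C * (8 * Kc R s c C * m%:R) `^ s) * C' <= c * (c' * (m%:R / 4) `^ t).

Local Notation sm := (same R E).
Local Notation K := (Kc R s c C).
Local Notation aE := (aa R E).

Definition rho : R := (2 * m%:R)^-1.
Definition del k := rho ^+ k.
Definition rr k := D' * del k.
Definition idx k y := Num.trunc (aE (del k.+1) y / del k.+1).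
Definition realized k x j := `[< exists y, E y /\ sm (del k) y x /\ idx k y = j >].
Definition rank k x := count (realized k x) (iota 0 (idx k x)).
Fixpoint cen k x := if k is k'.+1 then qpt R E' (cen k' x) (rr k') m (rank k' x) else y0.

Lemma mR : 4 <= m%:R :> R.
Proof. by rewrite (ler_nat R 4 m). Qed.

Lemma rho0 : 0 < rho.
Proof. by rewrite /rho invr_gt0; have := mR; lra. Qed.

Lemma rho8 : rho <= 8^-1.
Proof. rewrite /rho lef_pV2 ?posrE; have := mR; lra. Qed.

Lemma del0 k : 0 < del k.
Proof. by rewrite /del exprn_gt0 // rho0. Qed.

Lemma del1 k : del k <= 1.
Proof. by rewrite /del exprn_ile1 // ?ltW ?rho0 //; have := rho8; lra. Qed.

Lemma delS k : del k.+1 = del k * rho.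
Proof. by rewrite /del exprSr. Qed.

Lemma del_dec k : del k.+1 <= del k.
Proof. by rewrite delS ger_pMr ?del0 //; have := rho8; lra. Qed.

Lemma del_small e : 0 < e -> exists k, del k < e.
Proof.
move=> e0.
have H k : del k * (k.+1)%:R <= 1.
  elim: k => [|k IH]; first by rewrite /del expr0 mul1r.
  rewrite delS -mulrA.
  have r8 := rho8; have r0 := rho0; have d1 := del1 k; have d0 := del0 k.
  have : rho * (k.+2)%:R <= (k.+1)%:R / 2 + 2^-1.
    have : rho * (k.+2)%:R <= 8^-1 * (k.+2)%:R by rewrite ler_wpM2r.
    have k0 : 0 <= k%:R :> R by [].
    rewrite -[k.+2]addn1 natrD -[k.+1]addn1 natrD; move: k0; lra.
  move=> h; apply: le_trans (ler_wpM2l (ltW d0) h) _.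
  move: IH d1 d0; nra.
exists (Num.trunc e^-1).
have := truncnS_gt e^-1; set k := Num.trunc e^-1 => hk.
have := H k; move: hk; set q := (k.+1)%:R => hk Hk.
have q0 : 0 < q by rewrite /q ltr0Sn.
have : del k <= q^-1 by rewrite -[q^-1]mul1r ler_pdivlMr.
move/le_lt_trans; apply; rewrite -[e]invrK ltf_pV2 ?posrE ?invr_gt0 //.
Qed.

Lemma same0 x x' : E x -> E x' -> sm (del 0) x x'.
Proof.
move=> Ex Ex'; apply: same_close; rewrite /del expr0.
have := E01 _ Ex; have := E01 _ Ex' => /andP [a b] /andP [a' b'].
by rewrite ler_norml; apply/andP; split; lra.
Qed.

Lemma realized_eq k x x' : E x -> E x' -> sm (del k) x x' -> realized k x =1 realized k x'.
Proof.
move=> Ex Ex' H j; apply/asboolP/asboolP => -[y [Ey [H1 H2]]]; exists y; split => //; split => //.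
  exact: (same_trans Ex H1 H).
exact: (same_trans Ex' H1 (same_sym H)).
Qed.

Lemma idx_eq k x x' : E x -> E x' -> sm (del k.+1) x x' -> idx k x = idx k x'.
Proof. by move=> Ex Ex' H; rewrite /idx (aa_eq Ex Ex' H). Qed.

Lemma cen_same k x x' : E x -> E x' -> sm (del k) x x' -> cen k x = cen k x'.
Proof.
elim: k x x' => // k IH x x' Ex Ex' H /=.
have Hk : sm (del k) x x' := same_mono (del_dec k) H.
by rewrite (IH x x' Ex Ex' Hk) /rank (idx_eq _ _ _ Ex Ex' H) (eq_count (realized_eq _ _ _ Ex Ex' Hk)).
Qed.


Lemma rank_bound k x : E x -> ((rank k x).+1)%:R * c <= 2 * C * (8 * K * m%:R) `^ s.
Proof.
move=> Ex.
set n := idx k x; set P := realized k x.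
have Pn : P n by apply/asboolP; exists x; split => //; split => //; apply: same_close; rewrite subrr normr0 ltW // del0.
set l := [seq j <- iota 0 n.+1 | P j].
have sl : size l = (rank k x).+1.
  by rewrite size_filter -addn1 iotaD count_cat add0n /= Pn addn0 addn1.
set p := fun j => xget 0 [set y | E y /\ sm (del k) y x /\ idx k y = j].
have pP j : j \in l -> E (p j) /\ sm (del k) (p j) x /\ idx k (p j) = j.
  rewrite mem_filter => /andP [/asboolP Pj _].
  exact: (@xgetPex _ 0 [set y | E y /\ sm (del k) y x /\ idx k y = j]).
set d := del k.+1 / 2.
have dE : d = del k.+1 / 2 by [].
clearbody d.
have d0 : 0 < d by rewrite dE divr_gt0 // del0.
have d1 : d <= 1 by rewrite dE; have := del1 k.+1; have := del0 k.+1; lra.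
have K8 := Kc_ge8 R s c C.
have Kd0 : 0 <= K * del k by rewrite mulr_ge0 ?ltW ?del0 //; lra.
have H1 : forall j, j \in l -> E (p j) /\ `|p j - x| <= K * del k.
  move=> j jl; have [Ep [Sp _]] := pP j jl; split => //.
  exact: (same_bound cE E01 E0 E1 muC c0 cC hb s0 s1 (del k) (p j) x Ep Ex (del0 k) (del1 k) Sp).
have H2 : forall i j, i \in l -> j \in l -> i != j -> 2 * d <= `|p i - p j|.
  move=> i j il jl ij.
  have [Epi [Spi Ii]] := pP i il; have [Epj [Spj Ij]] := pP j jl.
  have ns : ~ sm (del k.+1) (p i) (p j).
    move=> S; move/eqP: ij; apply; rewrite -Ii -Ij; exact: idx_eq.
  rewrite dE mulrC divfK //; exact: ltW (far_of_notsame ns).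
have := pack cE E01 E0 E1 muC c0 cC hb s0 x (K * del k) d l p Ex d0 d1 Kd0
  (filter_uniq _ (iota_uniq _ _)) H1 H2.
rewrite sl.
have e1 : K * del k + d <= (8 * K * m%:R) * d.
  have mp : 0 < m%:R :> R by have := mR; lra.
  have -> : (8 * K * m%:R) * d = 2 * (K * del k).
    by rewrite dE delS /rho; field; rewrite gt_eqF.
  have : d <= del k.
    by rewrite dE; have := del_dec k; have := del0 k.+1; lra.
  move: K8 (del0 k); nra.
have e2 : (K * del k + d) `^ s <= (8 * K * m%:R) `^ s * d `^ s.
  have K0 : 0 <= 8 * K * m%:R by rewrite mulr_ge0 // mulr_ge0 //; lra.
  rewrite -powRM //; last exact: ltW.
  apply: ge0_ler_powR => //; rewrite nnegrE.
    exact: addr_ge0 Kd0 (ltW d0).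
  by rewrite mulr_ge0 // ltW.
have ds : 0 < d `^ s by apply: powR_gt0.
move=> H; have C0 : 0 <= 2 * C by have := lt_le_trans c0 cC; lra.
have := le_trans H (ler_wpM2l C0 e2).
by rewrite mulrA mulrA ler_pM2r.
Qed.

Lemma rr0 k : 0 < rr k.
Proof. by rewrite /rr mulr_gt0 // del0. Qed.

Lemma rrD k : rr k <= D'.
Proof. by rewrite /rr ler_piMr ?del1 // ltW. Qed.

Lemma rank_avail k x y : E x -> E' y -> (rank k x < size (Ssel R E' y (rr k) m) %/ 3)%N.
Proof.
move=> Ex Ey.
have A := cover_count2 cE' muC' c'0 c'C' hb' y (rr k) m Ey (rr0 k) (rrD k) m4.
have B := rank_bound k x Ex.
rewrite leq_divRL // -(ler_nat R) natrM.
set N := (size (Ssel R E' y (rr k) m))%:R in A *.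
set r1 := ((rank k x).+1)%:R in B *.
have COND' := COND.
set Q := 2 * C * (8 * K * m%:R) `^ s in B COND'.
have C'0 : 0 < C' by apply: lt_le_trans c'C'.
have h1 : 3 * (r1 * c) * C' <= 3 * Q * C'.
  by rewrite ler_pM2r // ler_pM2l.
have h2 : c * (c' * (m%:R / 4) `^ t) <= c * (N * C') by rewrite ler_pM2l.
have : (r1 * 3) * (c * C') <= N * (c * C').
  have -> : (r1 * 3) * (c * C') = 3 * (r1 * c) * C' by ring.
  have -> : N * (c * C') = c * (N * C') by ring.
  exact: le_trans h1 (le_trans COND' h2).
by rewrite ler_pM2r // mulr_gt0.
Qed.

Lemma cen_step k x : E x -> E' (cen k x) -> E' (cen k.+1 x) /\ `|cen k.+1 x - cen k x| <= rr k.
Proof.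
move=> Ex Ey /=.
exact: qpt_prop c'0 c'C' (cen k x) (rr k) m (rr0 k) (rrD k) m4 (rank k x) (rank_avail k x _ Ex Ey).
Qed.

Lemma cenE' k x : E x -> E' (cen k x).
Proof. by move=> Ex; elim: k => [|k IH] //; have [] := cen_step k x Ex IH. Qed.

Lemma cen_dist k x : E x -> `|cen k.+1 x - cen k x| <= rr k.
Proof. by move=> Ex; have [] := cen_step k x Ex (cenE' k x Ex). Qed.

Lemma idx_lt k x x' : E x -> E x' -> x < x' -> ~ sm (del k.+1) x x' -> (idx k x < idx k x')%N.
Proof.
move=> Ex Ex' xx' ns.
have := aa_sep E01 (ltW (del0 k.+1)) Ex Ex' xx' ns.
have /andP [a0 _] := aa_props E01 (ltW (del0 k.+1)) Ex.
rewrite /idx; set a := aE (del k.+1) x; set a' := aE (del k.+1) x'.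
have dp := del0 k.+1; set d := del k.+1 in dp *.
move=> H.
have H' : a / d + 1 < a' / d.
  by rewrite -(ltr_pM2r dp) mulrDl !divfK ?gt_eqF // mul1r.
have ad0 : 0 <= a / d by rewrite divr_ge0 // ltW.
have t1 := truncn_le (a / d); rewrite ad0 in t1.
have t2 := truncnS_gt (a' / d).
rewrite -(ltr_nat R); move: t1 t2 H'; rewrite -natr1; lra.
Qed.

Lemma rank_lt k x x' : E x -> E x' -> x < x' -> sm (del k) x x' -> ~ sm (del k.+1) x x' ->
  (rank k x < rank k x')%N.
Proof.
move=> Ex Ex' xx' S ns.
have nn := idx_lt k x x' Ex Ex' xx' ns.
rewrite /rank (eq_count (realized_eq k x' x Ex' Ex (same_sym S))).
set n := idx k x; set n' := idx k x' in nn *.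
have Pn : realized k x n.
  by apply/asboolP; exists x; split => //; split => //; apply: same_close; rewrite subrr normr0 ltW // del0.
have -> : n' = (n.+1 + (n' - n.+1))%N by rewrite subnKC.
have e : iota 0 n.+1 = iota 0 n ++ [:: n] by rewrite -addn1 iotaD.
rewrite (iotaD 0 n.+1 (n' - n.+1)) count_cat e count_cat /= Pn addn0.
lia.
Qed.

Lemma cen_sep k x x' : E x -> E x' -> x < x' -> sm (del k) x x' -> ~ sm (del k.+1) x x' ->
  cen k.+1 x + 8 * D' * del k.+1 <= cen k.+1 x'.
Proof.
move=> Ex Ex' xx' S ns /=.
rewrite (cen_same k x x' Ex Ex' S).
have := qpt_sep c'0 c'C' (cen k x') (rr k) m (rr0 k) (rrD k) m4 (rank k x) (rank k x')
  (rank_lt k x x' Ex Ex' xx' S ns) (rank_avail k x' _ Ex' (cenE' k x' Ex')).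
have -> : 2 * hstep R (rr k) m = 8 * D' * del k.+1.
  have mp : 0 < m%:R :> R by have := mR; lra.
  by rewrite /hstep /rr delS /rho; field; rewrite gt_eqF.
by [].
Qed.

Lemma incr_le (f : nat -> R) : (forall k, f k <= f k.+1) -> forall i j, (i <= j)%N -> f i <= f j.
Proof.
move=> H i j ij; rewrite -(subnKC ij); elim: (j - i)%N => [|n IH]; first by rewrite addn0.
by rewrite addnS; apply: le_trans IH (H _).
Qed.

Definition g x := sup (range (fun k => cen k x - 2 * rr k)).

Lemma rrS k : rr k.+1 <= rr k / 8.
Proof.
rewrite /rr delS mulrA ler_pM2l; last by rewrite mulr_gt0 // del0.
exact: rho8.
Qed.

Lemma g_near k x : E x -> `|g x - cen k x| <= 2 * rr k.
Proof.
move=> Ex.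
set b := fun k => cen k x - 2 * rr k.
set u := fun k => - (cen k x + 2 * rr k).
have bS : forall k, b k <= b k.+1.
  move=> j; have := cen_dist j x Ex; have := rrS j; have := rr0 j.
  rewrite /b ler_norml => h0 h1 /andP [h2 h3]; lra.
have uS : forall k, u k <= u k.+1.
  move=> j; have := cen_dist j x Ex; have := rrS j; have := rr0 j.
  rewrite /u ler_norml => h0 h1 /andP [h2 h3]; lra.
have bu : forall i j, b i <= - u j.
  move=> i j.
  have h1 := incr_le b bS i (maxn i j) (leq_maxl i j).
  have h2 := incr_le u uS j (maxn i j) (leq_maxr i j).
  have h3 : b (maxn i j) <= - u (maxn i j).
    by rewrite /b /u opprK; have := rr0 (maxn i j); lra.
  move: h1 h2 h3; lra.
have hs : has_ubound (range b) by exists (- u 0%N) => z [i _ <-]; apply: bu.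
have ne : range b !=set0 by exists (b 0%N), 0%N.
have g1 : b k <= g x by apply: ub_le_sup => //; exists k.
have g2 : g x <= - u k by apply: ge_sup => // z [i _ <-]; apply: bu.
move: g1 g2; rewrite /b /u ler_norml => g1 g2; apply/andP; split; lra.
Qed.

Lemma gE' x : E x -> E' (g x).
Proof.
move=> Ex; apply: closed_approx cE' _ => e e0.
have [k hk] := del_small (e / (2 * D')) (divr_gt0 e0 (mulr_gt0 (ltr0Sn _ _) D'0)).
exists (cen k x); split; first exact: cenE'.
apply: le_lt_trans (g_near k x Ex) _.
move: hk; rewrite /rr ltr_pdivlMr ?mulr_gt0 //; lra.
Qed.

Lemma g_bilip x x' : E x -> E x' -> x < x' ->
  (4 * D' * rho / K) * (x' - x) <= g x' - g x /\ g x' - g x <= (4 * D' / rho) * (x' - x).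
Proof.
move=> Ex Ex' xx'.
have K8 := Kc_ge8 R s c C; have K0 : 0 < K by lra.
have dx : 0 < x' - x by rewrite subr_gt0.
have SB d : 0 < d -> d <= 1 -> sm d x x' -> x' - x <= K * d.
  move=> d0 d1 S; have := same_bound cE E01 E0 E1 muC c0 cC hb s0 s1 d x x' Ex Ex' d0 d1 S.
  by rewrite distrC ger0_norm // ltW.
have [k0 hk0] := del_small ((x' - x) / K) (divr_gt0 dx K0).
have ex : exists k, ~~ `[< sm (del k) x x' >].
  exists k0; apply/negP => /asboolP S.
  have := SB _ (del0 k0) (del1 k0) S; move: hk0; rewrite ltr_pdivlMr // mulrC; lra.
case: (ex_minnP ex) => k1 /asboolPn nS1 min1.
have k1pos : (0 < k1)%N.
  by rewrite lt0n; apply/negP => /eqP k10; apply: nS1; rewrite k10; apply: same0.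
have k1E : k1 = (k1.-1).+1 by rewrite prednK.
set k := k1.-1 in k1E.
have Sk : sm (del k) x x'.
  case: (pselect (sm (del k) x x')) => // nS.
  have := min1 k; rewrite asboolF // => /(_ isT); rewrite k1E ltnn //.
rewrite k1E in nS1.
have B1 := SB _ (del0 k) (del1 k) Sk.
have B2 := far_of_notsame nS1; rewrite distrC ger0_norm ?(ltW dx) // in B2.
have G1 := g_near k.+1 x Ex; have G2 := g_near k.+1 x' Ex'.
have G3 := cen_sep k x x' Ex Ex' xx' Sk nS1.
have G4 := g_near k x Ex; have G5 := g_near k x' Ex'.
have G6 := cen_same k x x' Ex Ex' Sk.
have r0 := rho0.
have dS := delS k.
have L1 : (4 * D' * rho / K) * (x' - x) <= 4 * D' * del k.+1.
  have -> : (4 * D' * rho / K) * (x' - x) = (4 * D' * rho) * ((x' - x) / K) by field; rewrite gt_eqF.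
  rewrite dS [del k * rho]mulrC [4 * D' * (rho * _)]mulrA ler_pM2l ?mulr_gt0 //.
  by rewrite ler_pdivrMr // mulrC.
have L2 : 4 * D' * del k <= (4 * D' / rho) * (x' - x).
  have -> : 4 * D' * del k = (4 * D' / rho) * del k.+1 by rewrite dS; field; rewrite gt_eqF.
  by rewrite ler_pM2l ?divr_gt0 ?mulr_gt0 // ltW.
move: G1 G2 G4 G5; rewrite /rr !ler_norml G6 => /andP [a1 a2] /andP [a3 a4] /andP [a5 a6] /andP [a7 a8].
split.
  apply: le_trans L1 _; move: G3 a1 a2 a3 a4; lra.
apply: le_trans _ L2; move: a5 a6 a7 a8; lra.
Qed.
End Constr.


Section Ext.
Variable R : realType.
Variables (E : set R) (g : R -> R) (la lb : R).
Hypothesis cE : closed E.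
Hypothesis E01 : forall x, E x -> 0 <= x <= 1.
Hypothesis E0 : E 0.
Hypothesis E1 : E 1.
Hypothesis la0 : 0 < la.
Hypothesis gbl : forall x x', E x -> E x' -> x < x' ->
  la * (x' - x) <= g x' - g x /\ g x' - g x <= lb * (x' - x).
Hypothesis g01 : forall x, E x -> 0 <= g x <= 1.

Definition lo z := sup [set e | E e /\ e <= z].
Definition hi z := inf [set e | E e /\ z <= e].
Definition sl z := (g (hi z) - g (lo z)) / (hi z - lo z).
Definition fext z := g (lo z) + sl z * (z - lo z).

Lemma lo_props z : 0 <= z -> [/\ E (lo z), lo z <= z & forall e, E e -> e <= z -> e <= lo z].
Proof.
move=> z0; set S := [set e | E e /\ e <= z].
have S0 : S 0 by [].
have ne : S !=set0 by exists 0.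
have ub : ubound S z by move=> e [].
have hs : has_sup S by split => //; exists z.
split.
- apply: closed_approx cE _ => ep ep0.
  have [e [Ee ez] He] := sup_adherent ep0 hs.
  exists e; split => //.
  have : e <= lo z by apply: ub_le_sup => //; exists z.
  rewrite /lo -/S => h; rewrite ger0_norm; lra.
- exact: ge_sup.
- by move=> e Ee ez; apply: ub_le_sup => //; exists z.
Qed.

Lemma hi_props z : z <= 1 -> [/\ E (hi z), z <= hi z & forall e, E e -> z <= e -> hi z <= e].
Proof.
move=> z1; set S := [set e | E e /\ z <= e].
have S1 : S 1 by [].
have ne : S !=set0 by exists 1.
have lb0 : lbound S z by move=> e [].
have hs : has_inf S by split => //; exists z.
split.
- apply: closed_approx cE _ => ep ep0.
  have [e [Ee ez] He] := inf_adherent ep0 hs.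
  exists e; split => //.
  have : hi z <= e by apply: ge_inf => //; exists z.
  rewrite /hi -/S => h; rewrite distrC ger0_norm; lra.
- exact: lb_le_inf.
- by move=> e Ee ez; apply: ge_inf => //; exists z.
Qed.


Lemma gle x x' : E x -> E x' -> x <= x' ->
  la * (x' - x) <= g x' - g x /\ g x' - g x <= lb * (x' - x).
Proof.
move=> Ex Ex'; rewrite le_eqVlt => /orP [/eqP ->|xx']; last exact: gbl.
by rewrite !subrr !mulr0.
Qed.

Lemma lb0 : 0 < lb.
Proof.
have [h1 h2] := gbl 0 1 E0 E1 ltr01; move: h1 h2; rewrite subr0 mulr1 => h1 h2.
have : la <= lb * 1 by apply: le_trans h1 h2.
by rewrite mulr1 => h; apply: lt_le_trans h.
Qed.

Lemma key z e : 0 <= z <= 1 -> E e -> e <= lo z \/ hi z <= e.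
Proof.
move=> /andP [z0 z1] Ee; have [_ _ hl] := lo_props z z0; have [_ _ hh] := hi_props z z1.
by case: (leP e z) => ez; [left; apply: hl|right; apply: hh => //; apply: ltW].
Qed.

Lemma sl_bd z : 0 <= z <= 1 -> lo z < hi z -> la <= sl z <= lb.
Proof.
move=> /andP [z0 z1] lh; have [El _ _] := lo_props z z0; have [Eh _ _] := hi_props z z1.
have [h1 h2] := gle (lo z) (hi z) El Eh (ltW lh).
have d0 : 0 < hi z - lo z by rewrite subr_gt0.
by rewrite /sl ler_pdivlMr // ler_pdivrMr // h1 h2.
Qed.

Lemma fext_E z : E z -> fext z = g z.
Proof.
move=> Ez; have /andP [z0 z1] := E01 z Ez.
have [_ lz hl] := lo_props z z0.
have e : lo z = z by apply/eqP; rewrite eq_le lz hl.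
by rewrite /fext e subrr mulr0 addr0.
Qed.

Lemma right_piece z : 0 <= z <= 1 ->
  la * (z - lo z) <= fext z - g (lo z) /\ fext z - g (lo z) <= lb * (z - lo z).
Proof.
move=> zz; have /andP [z0 z1] := zz.
have [_ lz _] := lo_props z z0; have [_ zh _] := hi_props z z1.
rewrite /fext addrAC subrr add0r.
move: lz; rewrite le_eqVlt => /orP [/eqP ->|lz]; first by rewrite !subrr !mulr0.
have /andP [s1 s2] := sl_bd z zz (lt_le_trans lz zh).
have d0 : 0 < z - lo z by rewrite subr_gt0.
by split; rewrite ler_pM2r.
Qed.

Lemma left_piece z : 0 <= z <= 1 ->
  la * (hi z - z) <= g (hi z) - fext z /\ g (hi z) - fext z <= lb * (hi z - z).
Proof.
move=> zz; have /andP [z0 z1] := zz.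
have [_ lz _] := lo_props z z0; have [_ zh _] := hi_props z z1.
case: (ltP (lo z) (hi z)) => lh; last first.
  have el : lo z = z by apply: le_anti; rewrite lz /=; exact: le_trans zh lh.
  have eh : hi z = z by apply: le_anti; rewrite zh andbT -[X in _ <= X]el.
  by rewrite /fext el eh !subrr !mulr0 addr0 subrr.
have /andP [s1 s2] := sl_bd z zz lh.
have d0 : 0 < hi z - lo z by rewrite subr_gt0.
have e : g (hi z) - fext z = sl z * (hi z - z).
  rewrite /fext /sl; field; by rewrite gt_eqF.
have hz : 0 <= hi z - z by rewrite subr_ge0.
by rewrite e; split; rewrite ler_wpM2r.
Qed.

Lemma incr z z' : 0 <= z <= 1 -> 0 <= z' <= 1 -> z < z' ->
  la * (z' - z) <= fext z' - fext z /\ fext z' - fext z <= lb * (z' - z).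
Proof.
move=> zz zz' zlt; have /andP [z0 z1] := zz; have /andP [z0' z1'] := zz'.
have [El lz hl] := lo_props z z0; have [Eh zh hh] := hi_props z z1.
have [El' lz' hl'] := lo_props z' z0'; have [Eh' zh' hh'] := hi_props z' z1'.
case: (leP (hi z) (lo z')) => H.
  have [a1 a2] := left_piece z zz.
  have [b1 b2] := gle (hi z) (lo z') Eh El' H.
  have [c1 c2] := right_piece z' zz'.
  by split; move: a1 a2 b1 b2 c1 c2; lra.
have e1 : lo z' = lo z.
  apply/eqP; rewrite eq_le; apply/andP; split.
    by case: (key z (lo z') zz El') => // h; move: h H; rewrite leNgt => /negP.
  by apply: hl' => //; apply: le_trans lz (ltW zlt).
have e2 : hi z' = hi z.
  apply/eqP; rewrite eq_le; apply/andP; split.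
    by case: (key z' (hi z) zz' Eh) => // h; move: h H; rewrite leNgt => /negP.
  apply: hh => //; apply: le_trans (ltW zlt) zh'.
have lh : lo z < hi z by apply: le_lt_trans lz (lt_le_trans zlt _); rewrite -e2.
have /andP [s1 s2] := sl_bd z zz lh.
have e : fext z' - fext z = sl z * (z' - z).
  by rewrite /fext /sl e1 e2; ring.
have d0 : 0 < z' - z by rewrite subr_gt0.
by rewrite e; split; rewrite ler_pM2r.
Qed.

Lemma fext_range z : 0 <= z <= 1 -> 0 <= fext z <= 1.
Proof.
move=> zz; have /andP [z0 z1] := zz.
have [El lz _] := lo_props z z0; have [Eh zh _] := hi_props z z1.
have [a1 _] := right_piece z zz; have [b1 _] := left_piece z zz.
have /andP [g1 _] := g01 _ El; have /andP [_ g2] := g01 _ Eh.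
have : 0 <= la * (z - lo z) by rewrite mulr_ge0 ?subr_ge0 // ltW.
have : 0 <= la * (hi z - z) by rewrite mulr_ge0 ?subr_ge0 // ltW.
move: a1 b1 g1 g2 => a1 b1 g1 g2 p1 p2; apply/andP; split; lra.
Qed.

Lemma fext_bilip : exists L : R, 1 <= L /\ forall x y, 0 <= x <= 1 -> 0 <= y <= 1 ->
  L^-1 * `|x - y| <= `|fext x - fext y| /\ `|fext x - fext y| <= L * `|x - y|.
Proof.
exists (Num.max 1 (Num.max lb la^-1)); split; first by rewrite le_max lexx.
set L := Num.max 1 (Num.max lb la^-1).
have L1 : 1 <= L by rewrite le_max lexx.
have Lb : lb <= L by rewrite le_max le_max lexx orbT.
have La : la^-1 <= L by rewrite le_max le_max lexx !orbT.
have L0 : 0 < L by lra.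
have La' : L^-1 <= la.
  by rewrite -[la]invrK lef_pV2 ?posrE ?invr_gt0.
have W x y : 0 <= x <= 1 -> 0 <= y <= 1 -> x < y ->
    L^-1 * `|x - y| <= `|fext x - fext y| /\ `|fext x - fext y| <= L * `|x - y|.
  move=> xx yy xy; have [h1 h2] := incr x y xx yy xy.
  have d0 : 0 < y - x by rewrite subr_gt0.
  rewrite distrC (distrC (fext x)) !ger0_norm ?(ltW d0) //; last first.
    by apply: le_trans h1; rewrite mulr_ge0 // ?ltW.
  split.
    by apply: le_trans h1; rewrite ler_pM2r.
  by apply: le_trans h2 _; rewrite ler_pM2r.
move=> x y xx yy; case: (ltgtP x y) => xy.
- exact: W.
- by rewrite distrC (distrC (fext x)); apply: W.
- by rewrite xy !subrr normr0 !mulr0.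
Qed.
End Ext.


Lemma diam01 (R : realType) (E : set R) : (forall x, E x -> 0 <= x <= 1) -> E 0 -> E 1 -> diam E = 1.
Proof.
move=> E01 E0 E1; rewrite /diam.
have ub : ubound [set `|x - y| | x in E & y in E] 1.
  move=> z [x Ex [y Ey <-]]; have := E01 x Ex; have := E01 y Ey.
  move=> /andP [y0 y1] /andP [x0 x1]; rewrite ler_norml; apply/andP; split; lra.
have m1 : [set `|x - y| | x in E & y in E] 1.
  by exists 1 => //; exists 0 => //; rewrite subr0 normr1.
apply: le_anti; apply/andP; split.
  by apply: ge_sup => //; exists 1.
by apply: ub_le_sup => //; exists 1.
Qed.

Lemma diam_ne (R : realType) (E : set R) : 0 < diam E -> exists y, E y.
Proof.
move=> d0; apply: contrapT => ne.
have : [set `|x - y| | x in E & y in E] = set0.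
  by apply/seteqP; split => // z [x Ex _]; apply: ne; exists x.
by move=> H; move: d0; rewrite /diam H sup0 ltxx.
Qed.

Theorem mainTheorem5 (R : realType) (s t : R) (E E' : set R) :
  E `<=` `[0, 1] -> E' `<=` `[0, 1] ->
  ahlfors_regular s E -> ahlfors_regular t E' -> s < t ->
  E 0 -> E 1 ->
  exists f : R -> R,
    f @` `[0, 1] `<=` `[0, 1] /\ bilipschitz_on `[0, 1] f /\ f @` E `<=` E'.
Proof.
move=> sE sE' [cpE [dE [mu [c [C [muC [c0 [cC hb]]]]]]]]
  [cpE' [dE' [mu' [c' [C' [muC' [c'0 [c'C' hb']]]]]]]] st E0 E1.
have E01 : forall x, E x -> 0 <= x <= 1 by move=> x /sE; rewrite /= in_itv.
have E'01 : forall x, E' x -> 0 <= x <= 1 by move=> x /sE'; rewrite /= in_itv.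
have cE : closed E by apply: compact_closed => //; exact: norm_hausdorff.
have cE' : closed E' by apply: compact_closed => //; exact: norm_hausdorff.
have dE1 := @diam01 R E E01 E0 E1.
rewrite dE1 in hb.
set D' := diam E' in hb' dE'.
have s0 : 0 <= s := exp_ge0 c0 cC hb 0 E0 ltr01.
have [y0 Ey0] := @diam_ne R E' dE'.
have t1 : t <= 1 := exp_le1 cE' muC' c'0 c'C' hb' y0 Ey0 dE'.
have s1 : s < 1 by lra.
set K := Kc R s c C.
have K8 := Kc_ge8 R s c C.
set q := (4^-1 : R) `^ t.
have q0 : 0 < q by apply: powR_gt0.
have C0 : 0 < C by apply: lt_le_trans cC.
have C'0 : 0 < C' by apply: lt_le_trans c'C'.
have ts : 0 < t - s by rewrite subr_gt0.
have [m [m4 Hm]] := @pow_unbounded R (t - s) (6 * C * (8 * K) `^ s * C' / (c * c' * q)) ts.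
have mp : 0 < m%:R :> R by rewrite ltr0n; apply: leq_ltn_trans m4.
have COND : 3 * (2 * C * (8 * K * m%:R) `^ s) * C' <= c * (c' * (m%:R / 4) `^ t).
  have K0 : 0 <= 8 * K by rewrite mulr_ge0 //; apply: le_trans K8.
  have i4 : 0 <= (4^-1 : R) by rewrite invr_ge0.
  rewrite (powRM s K0 (ltW mp)) (powRM t (ltW mp) i4) -/q.
  have -> : (m%:R : R) `^ t = m%:R `^ (t - s) * m%:R `^ s.
    by rewrite -powRD ?subrK //; apply/implyP => _; rewrite gt_eqF.
  have ms : 0 < (m%:R : R) `^ s by apply: powR_gt0.
  move: Hm; rewrite ltr_pdivrMr ?mulr_gt0 // => Hm.
  have : (6 * C * (8 * K) `^ s * C') * m%:R `^ s <= (m%:R `^ (t - s) * (c * c' * q)) * m%:R `^ s.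
    by rewrite ler_pM2r // ltW.
  move=> H.
  have -> : 3 * (2 * C * ((8 * K) `^ s * m%:R `^ s)) * C' = 6 * C * (8 * K) `^ s * C' * m%:R `^ s by ring.
  have -> : c * (c' * (m%:R `^ (t - s) * m%:R `^ s * q)) = m%:R `^ (t - s) * (c * c' * q) * m%:R `^ s by ring.
  exact: H.
set gg := g R E E' D' y0 m.
set la := 4 * D' * rho R m / K.
set lb := 4 * D' / rho R m.
have r0 := rho0 R m m4.
have la0 : 0 < la by rewrite /la divr_gt0 ?mulr_gt0 //; apply: lt_le_trans K8.
have gbl : forall x x', E x -> E x' -> x < x' ->
    la * (x' - x) <= gg x' - gg x /\ gg x' - gg x <= lb * (x' - x).
  exact: (@g_bilip R s E mu c C cE E01 E0 E1 muC c0 cC hb s0 s1 t E' mu' c' C' D' cE' muC' c'0 c'C' hb' dE' y0 m Ey0 m4 COND).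
have gE : forall x, E x -> E' (gg x).
  exact: (@gE' R s E mu c C cE E01 E0 E1 muC c0 cC hb s0 s1 t E' mu' c' C' D' cE' muC' c'0 c'C' hb' dE' y0 m Ey0 m4 COND).
have g01 : forall x, E x -> 0 <= gg x <= 1 by move=> x Ex; apply: E'01; apply: gE.
exists (fext R E gg); split; [|split].
- move=> _ [z zI <-]; move: zI; rewrite /= !in_itv /= => zI.
  exact: (@fext_range R E gg la lb cE E0 E1 la0 gbl g01 z zI).
- have [L [L1 HL]] := @fext_bilip R E gg la lb cE E0 E1 la0 gbl.
  exists L; split => // x y; rewrite /= !in_itv /= => xI yI; exact: HL.
- move=> _ [z Ez <-]; rewrite (@fext_E R E gg cE E01 E0 z Ez); exact: gE.
Qed.
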